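(* Let $p\ge k\ge 1$ be integers and let $\mathbf y\in\mathbb{R}^p$. Let $\mathcal{I}^k\subseteq\{1,\dots,p\}$ be a top-$k$ index set of $\mathbf y$ (a set of $k$ indices of entries of largest magnitude), and let $\operatorname{top}_k(\mathbf y)$ be the vector that agrees with $\mathbf y$ on $\mathcal{I}^k$ and is $0$ elsewhere. Let $\gamma_0\ge 0$ be such that $\|\mathbf y-\operatorname{top}_k(\mathbf y)\|^2\le\gamma_0\|\mathbf y\|^2$. Let $0\le d\le k$ be an integer, and let $\tilde{\mathcal I}^k$ be a $k$-element index set with $\mathbf H(\mathcal I^k,\tilde{\mathcal I}^k)=2d$, chosen at random so that its $k-d$ common indices with $\mathcal{I}^k$ form a uniformly random $(k-d)$-subset of $\mathcal I^k$. Define $\mathrm{comp}(\mathbf y)\in\mathbb{R}^p$ by $\mathrm{comp}(\mathbf y)_m=\mathbf y_m$ if $m\in\tilde{\mathcal I}^k$ and $0$ otherwise. Then $$\mathbb{E}\|\mathbf y-\mathrm{comp}(\mathbf y)\|^2\le\gamma\|\mathbf y\|^2,\qquad \gamma:=\frac{d}{k}+\Big(1-\frac{d}{k}\Big)\gamma_0 .$$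
   Context: For a set $\mathcal I$ of $k$ indices in $\{1,\dots,p\}$, let $\mathbf x_{\mathcal I}\in\{0,1\}^p$ be its indicator vector. For two such sets, $\mathbf H(\mathcal I_1,\mathcal I_2)$ denotes the Hamming distance between $\mathbf x_{\mathcal I_1}$ and $\mathbf x_{\mathcal I_2}$; for two $k$-element sets it equals $2d$ where $d=k-|\mathcal I_1\cap\mathcal I_2|$. $\|\cdot\|$ is the Euclidean norm. *)

(* Defs.v *)
From mathcomp Require Import all_boot all_order all_algebra.
Set Implicit Arguments. Unset Strict Implicit. Unset Printing Implicit Defensive.
Import Order.TTheory GRing.Theory Num.Theory.
Local Open Scope ring_scope.

Definition sqnorm (R : realFieldType) (p : nat) (y : 'I_p -> R) : R :=
  \sum_(i < p) y i ^+ 2.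

(* the vector agreeing with y on S and 0 elsewhere
   (top_k(y) = restrict I y, comp(y) = restrict I~ y) *)
Definition restrict (R : realFieldType) (p : nat) (S : {set 'I_p}) (y : 'I_p -> R)
  : 'I_p -> R := fun m => if m \in S then y m else 0.

Definition is_topk (R : realFieldType) (p : nat) (y : 'I_p -> R) (k : nat)
  (I : {set 'I_p}) : Prop :=
  #|I| = k /\ (forall i j, i \in I -> j \notin I -> `|y j| <= `|y i|).

Definition hamming (p : nat) (I J : {set 'I_p}) : nat :=
  #|(I :\: J) :|: (J :\: I)|.

(* Main.v *)
Require Import Defs.
From mathcomp Require Import all_boot all_order all_algebra.
From mathcomp Require Import zify ring lra.
Import Order.TTheory GRing.Theory Num.Theory.
Local Open Scope ring_scope.

Lemma sqnorm_compl (R : realFieldType) (p : nat) (S : {set 'I_p}) (y : 'I_p -> R) :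
  sqnorm (fun m => y m - restrict S y m) = \sum_(i | i \notin S) y i ^+ 2.
Proof.
rewrite /sqnorm /restrict (bigID (fun i => i \in S)) /= big1 ?add0r.
  by apply: eq_bigr => i /negbTE ->; rewrite subr0.
by move=> i ->; rewrite subrr expr0n.
Qed.

Lemma count_sub (T : finType) (I : {set T}) (i : T) (j : nat) : i \in I ->
  #|[set X : {set T} | X \subset I & #|X| == j.+1] :&: [set X : {set T} | i \in X]| = 'C(#|I|.-1, j).
Proof.
move=> iI.
have -> : [set X : {set T} | X \subset I & #|X| == j.+1] :&: [set X : {set T} | i \in X]
  = (fun B => i |: B) @: [set B : {set T} | B \subset I :\ i & #|B| == j].
  apply/setP => X; rewrite !inE; apply/idP/imsetP.
    case/andP => /andP [XI /eqP cX] iX; exists (X :\ i); last by rewrite setD1K.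
    have := cardsD1 i X; rewrite iX cX inE setSD //= => H; apply/eqP; lia.
  case=> B; rewrite inE => /andP [BI /eqP cB] ->.
  have iB : i \notin B by apply/negP => /(subsetP BI); rewrite !inE eqxx.
  rewrite cardsU1 iB cB setU11 andbT /= eqxx andbT.
  apply/subsetP => x; rewrite !inE => /orP [/eqP -> //|xB].
  by move: (subsetP BI x xB); rewrite !inE => /andP [].
rewrite card_in_imset.
  by rewrite cards_draws (cardsD1 i I) iI.
move=> B1 B2; rewrite !inE => /andP [B1I _] /andP [B2I _] E.
have n1 : i \notin B1 by apply/negP => /(subsetP B1I); rewrite !inE eqxx.
have n2 : i \notin B2 by apply/negP => /(subsetP B2I); rewrite !inE eqxx.
by rewrite -(setU1K n1) -(setU1K n2) E.
Qed.
Theorem lemma1 (R : realFieldType) (p k : nat) (y : 'I_p -> R)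
  (I : {set 'I_p}) (gamma0 : R) (d : nat) (w : {set 'I_p} -> R) :
  (1 <= k)%N -> (k <= p)%N ->
  is_topk y k I ->
  0 <= gamma0 ->
  sqnorm (fun m => y m - restrict I y m) <= gamma0 * sqnorm y ->
  (d <= k)%N ->
  (forall S, 0 <= w S) ->
  \sum_(S : {set 'I_p}) w S = 1 ->
  (forall S, w S != 0 -> #|S| = k /\ hamming I S = (2 * d)%N) ->
  (forall T : {set 'I_p}, T \subset I -> #|T| = (k - d)%N ->
     \sum_(S : {set 'I_p} | S :&: I == T) w S = ('C(k, k - d))%:R^-1) ->
  \sum_(S : {set 'I_p}) w S * sqnorm (fun m => y m - restrict S y m)
    <= (d%:R / k%:R + (1 - d%:R / k%:R) * gamma0) * sqnorm y.
Proof.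
move=> k1 kp [cI _] g0 hB dk w0 w1 wsupp wunif.
set f := fun i => y i ^+ 2.
have f0 : forall i, 0 <= f i by move=> i; exact: sqr_ge0.
set N := sqnorm y.
set A := \sum_(i in I) f i.
set B := \sum_(i | i \notin I) f i.
have NAB : N = A + B by rewrite /N /sqnorm (bigID (fun i => i \in I)).
rewrite sqnorm_compl -/B in hB.
set g := fun T : {set 'I_p} => \sum_(i in T) f i.
have st1 : forall S : {set 'I_p}, sqnorm (fun m => y m - restrict S y m) <= N - g (S :&: I).
  move=> S; rewrite sqnorm_compl /N /sqnorm /g.
  rewrite [\sum_(i < p) _](bigID (fun i => i \in S :&: I)) /= addrAC subrr add0r.
  rewrite [X in _ <= X](bigID (fun i => i \notin S)) /=.
  rewrite -[X in X <= _]addr0; apply: lerD; last by apply: sumr_ge0 => i _; exact: f0.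
  rewrite le_eqVlt; apply/orP; left; apply/eqP/eq_bigl => i; rewrite !inE; case: (boolP (i \in S)) => iS; rewrite ?iS ?andbT ?andbF //=.
set X := \sum_(S : {set 'I_p}) w S * g (S :&: I).
have st2 : \sum_(S : {set 'I_p}) w S * sqnorm (fun m => y m - restrict S y m) <= N - X.
  have -> : N - X = \sum_(S : {set 'I_p}) w S * (N - g (S :&: I)).
    rewrite /X; under [RHS]eq_bigr => U _ do rewrite mulrBr.
    by rewrite sumrB -mulr_suml w1 mul1r.
  by apply: ler_sum => S _; apply: ler_wpM2l.
set D := [set T : {set 'I_p} | T \subset I & #|T| == (k - d)%N].
have cardSI : forall S, w S != 0 -> #|S :&: I| = (k - d)%N.
  move=> S /wsupp [cS hS]; move: hS; rewrite /hamming cardsU.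
  have -> : (I :\: S) :&: (S :\: I) = set0.
    by apply/setP => x; rewrite !inE; case: (x \in I); case: (x \in S); rewrite ?andbF.
  rewrite cards0 subn0 !cardsD cI cS setIC => H; have := subset_leq_card (subsetIl S I); rewrite cS; lia.
have st3 : X = ('C(k, k - d))%:R^-1 * \sum_(T in D) g T.
  rewrite /X (partition_big (fun S => S :&: I) predT) //=.
  rewrite (bigID (fun T => T \in D)) /= [X in _ + X]big1 ?addr0.
    rewrite mulr_sumr; apply: eq_bigr => T TD.
    transitivity (g T * \sum_(S | S :&: I == T) w S).
      by rewrite mulr_sumr; apply: eq_bigr => S /eqP <-; rewrite mulrC.
    move: TD; rewrite inE => /andP [TI /eqP cT]; by rewrite wunif // mulrC.
  move=> T TD; apply: big1 => S /eqP E.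
  have [->|wS] := eqVneq (w S) 0; first by rewrite mul0r.
  exfalso; move/negP: TD; apply; rewrite inE -E subsetIr /= cardSI //.
have st4 : \sum_(T in D) g T = \sum_(i in I) f i * (#|D :&: [set Z : {set 'I_p} | i \in Z]|)%:R.
  transitivity (\sum_(T in D) \sum_(i in I) (i \in T)%:R * f i).
    apply: eq_bigr => T; rewrite inE => /andP [TI _]; rewrite /g.
    rewrite [RHS](bigID (fun i => i \in T)) /= [X in _ + X]big1 ?addr0; last first.
      by move=> i /andP [_ /negbTE ->]; rewrite mul0r.
    apply: eq_big => i; last by move=> ->; rewrite mul1r.
    by rewrite andb_idl //; apply: (subsetP TI).
  rewrite exchange_big; apply: eq_bigr => i _.
  rewrite -mulr_suml mulrC; congr (_ * _).
  transitivity (\sum_(T in D | i \in T) (1:R)).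
    by rewrite big_mkcondr; apply: eq_bigr => T _; case: (i \in T).
  rewrite (eq_bigl (fun T => T \in D :&: [set Z : {set 'I_p} | i \in Z])); last by move=> T; rewrite !inE.
  by rewrite sumr_const.
have kR : (k%:R : R) != 0 by rewrite pnatr_eq0 -lt0n.
have XA : X = (1 - d%:R / k%:R) * A.
  rewrite st3 st4 /A mulr_sumr.
  case E: (k - d)%N => [|j].
    have dk' : d = k by lia.
    rewrite dk' divff // subrr mul0r; apply: big1 => i _.
    have -> : D :&: [set Z : {set 'I_p} | i \in Z] = set0; last by rewrite cards0 !mulr0.
    apply/setP => Z; rewrite /D E !inE; apply/negP => /andP [/andP [_ /eqP /cards0_eq ->]].
    by rewrite inE.
  have Cj : forall i, i \in I -> #|D :&: [set Z : {set 'I_p} | i \in Z]| = 'C(k.-1, j).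
    by move=> i iI; rewrite /D E count_sub // cI.
  rewrite mulr_sumr; apply: eq_bigr => i iI; rewrite Cj // mulrCA mulrC; congr (_ * _).
  have hb := mul_bin_diag k j.
  have Cn0 : ('C(k, j.+1)%:R : R) != 0 by rewrite pnatr_eq0 -lt0n bin_gt0; lia.
  have e1 : (k%:R : R) * 'C(k.-1, j)%:R = (j.+1)%:R * 'C(k, j.+1)%:R by rewrite -!natrM hb.
  have e2 : (j.+1)%:R = (k%:R : R) - d%:R by rewrite -natrB // -E.
  apply: (mulfI kR); rewrite mulrCA e1 e2.
  by field; rewrite kR Cn0.
have t0 : 0 <= (d%:R / k%:R : R) by rewrite divr_ge0.
have t1 : (d%:R / k%:R : R) <= 1 by rewrite ler_pdivrMr ?mul1r ?ler_nat // ltr0n.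
have A0 : 0 <= A by apply: sumr_ge0 => i _; exact: f0.
have hB' : (1 - d%:R / k%:R) * B <= (1 - d%:R / k%:R) * (gamma0 * N) by apply: ler_wpM2l; [lra | exact: hB].
apply: (le_trans st2); rewrite XA NAB; rewrite NAB in hB'; lra.
Qed.
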